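(* Let $Q,H\in\mathbb{S}^n$ and $\mathcal{B}=\{B^1,\dots,B^m\}\subseteq\mathbb{S}^n$. Assume $\mathcal{B}$ satisfies Condition (B): for every $k$, $$\{X\in\mathbb{S}^n_+ : B^k\bullet X=0\}\subseteq \mathbb{J}_+(\mathcal{B}):=\{X\in\mathbb{S}^n_+ : B^j\bullet X\ge 0\ (1\le j\le m)\}.$$ Let $\overline{X}\in\mathbb{S}^n$ satisfy the KKT conditions: $\overline{X}\in\mathbb{J}_+(\mathcal{B})$, $H\bullet\overline{X}=1$, and there exist $\bar t\in\mathbb{R}$, $\bar y\in\mathbb{R}^m$ with $\bar y\ge 0$, and $\overline{Y}\in\mathbb{S}^n_+$ such that $Q-\bar tH-\sum_{k=1}^m\bar y_kB^k=\overline{Y}$, $\bar y_k(B^k\bullet\overline{X})=0$ $(1\le k\le m)$ and $\overline{Y}\bullet\overline{X}=0$. Suppose that $B^k\bullet\overline{X}=0$ for some $k\in\{1,\dots,m\}$. Then, with $r=\operatorname{rank}\overline{X}$, there exist $x\in\mathbb{R}^n$ and $\tau\ge 1/r$ with $H\bullet xx^T=\tau$ such that $\widetilde{X}=xx^T/\tau$ is an optimal solution of the SDP $$\eta=\inf\{Q\bullet X : X\in\mathbb{J}_+(\mathcal{B}),\ H\bullet X=1\}$$ and also an optimal solution of the QCQP $$\zeta=\inf\{Q\bullet X : X\in\mathbb{J}_+(\mathcal{B}),\ \operatorname{rank}X= 1,\ H\bullet X=1\},$$ with $Q\bullet\widetilde{X}=Q\bullet\overline{X}$.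
   Context: $\mathbb{S}^n$ denotes the space of real $n\times n$ symmetric matrices, $\mathbb{S}^n_+$ its cone of positive semidefinite matrices, and $A\bullet X=\sum_{i,j}A_{ij}X_{ij}$ the trace inner product. *)

(* Defs.v *)
From mathcomp Require Import all_boot all_order all_algebra.
From mathcomp Require Import reals.
Set Implicit Arguments. Unset Strict Implicit. Unset Printing Implicit Defensive.
Import Order.TTheory GRing.Theory Num.Theory.
Local Open Scope ring_scope.

Definition frob (R : realType) (n : nat) (A X : 'M[R]_n) : R :=
  \sum_(i < n) \sum_(j < n) A i j * X i j.

Definition symmS (R : realType) (n : nat) (X : 'M[R]_n) : Prop := X^T = X.

Definition psd (R : realType) (n : nat) (X : 'M[R]_n) : Prop :=
  symmS X /\ forall v : 'cV[R]_n, 0 <= (v^T *m X *m v) 0 0.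

Definition Jplus (R : realType) (n m : nat) (B : 'I_m -> 'M[R]_n) (X : 'M[R]_n) : Prop :=
  psd X /\ forall j, 0 <= frob (B j) X.

Definition condB (R : realType) (n m : nat) (B : 'I_m -> 'M[R]_n) : Prop :=
  forall k (X : 'M[R]_n), psd X -> frob (B k) X = 0 -> Jplus B X.

Definition sdp_optimal (R : realType) (n m : nat) (B : 'I_m -> 'M[R]_n)
  (Q H X : 'M[R]_n) : Prop :=
  (Jplus B X /\ frob H X = 1) /\
  forall Y, Jplus B Y -> frob H Y = 1 -> frob Q X <= frob Q Y.

Definition qcqp_optimal (R : realType) (n m : nat) (B : 'I_m -> 'M[R]_n)
  (Q H X : 'M[R]_n) : Prop :=
  (Jplus B X /\ \rank X = 1%N /\ frob H X = 1) /\
  forall Y, Jplus B Y -> \rank Y = 1%N -> frob H Y = 1 -> frob Q X <= frob Q Y.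

(* Main.v *)
Require Import Defs.
From mathcomp Require Import all_boot all_order all_algebra.
From mathcomp Require Import reals.
From mathcomp Require Import ring lra.
Set Implicit Arguments. Unset Strict Implicit. Unset Printing Implicit Defensive.
Import Order.TTheory GRing.Theory Num.Theory.
Local Open Scope ring_scope.

Definition oo (R : realType) (n : nat) (v : 'cV[R]_n) : 'M[R]_n := v *m v^T.

Lemma frobDr (R : realType) (n : nat) (A X Y : 'M[R]_n) :
  frob A (X + Y) = frob A X + frob A Y.
Proof.
rewrite /frob -big_split; apply eq_bigr => i _; rewrite -big_split.
by apply eq_bigr => j _; rewrite mxE mulrDr.
Qed.

Lemma frob0r (R : realType) (n : nat) (A : 'M[R]_n) : frob A 0 = 0.
Proof. by rewrite /frob big1 // => i _; rewrite big1 // => j _; rewrite mxE mulr0. Qed.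

Lemma frobZr (R : realType) (n : nat) (A X : 'M[R]_n) c :
  frob A (c *: X) = c * frob A X.
Proof.
rewrite /frob mulr_sumr; apply eq_bigr => i _; rewrite mulr_sumr.
by apply eq_bigr => j _; rewrite mxE mulrCA.
Qed.

Lemma frobC (R : realType) (n : nat) (A X : 'M[R]_n) : frob A X = frob X A.
Proof. by rewrite /frob; apply eq_bigr => i _; apply eq_bigr => j _; rewrite mulrC. Qed.

Lemma frobDl (R : realType) (n : nat) (A B X : 'M[R]_n) :
  frob (A + B) X = frob A X + frob B X.
Proof. by rewrite frobC frobDr -!(frobC X). Qed.

Lemma frobZl (R : realType) (n : nat) (A X : 'M[R]_n) c :
  frob (c *: A) X = c * frob A X.
Proof. by rewrite frobC frobZr frobC. Qed.

Lemma frobNl (R : realType) (n : nat) (A X : 'M[R]_n) :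
  frob (- A) X = - frob A X.
Proof. by rewrite -scaleN1r frobZl mulN1r. Qed.

Lemma frobNr (R : realType) (n : nat) (A X : 'M[R]_n) :
  frob A (- X) = - frob A X.
Proof. by rewrite -scaleN1r frobZr mulN1r. Qed.

Lemma frob_sumr (R : realType) (n : nat) (A : 'M[R]_n) (I : Type) (s : seq I) (F : I -> 'M[R]_n) :
  frob A (\sum_(v <- s) F v) = \sum_(v <- s) frob A (F v).
Proof. exact: (big_morph (frob A) (frobDr A) (frob0r A)). Qed.

Lemma frob_suml (R : realType) (n : nat) (X : 'M[R]_n) (I : Type) (s : seq I) (F : I -> 'M[R]_n) :
  frob (\sum_(v <- s) F v) X = \sum_(v <- s) frob (F v) X.
Proof. by rewrite frobC frob_sumr; apply eq_bigr => i _; rewrite frobC. Qed.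

Lemma outerE (R : realType) (n : nat) (a b : 'cV[R]_n) i j :
  (a *m b^T) i j = a i 0 * b j 0.
Proof. by rewrite !mxE big_ord1 mxE. Qed.

Lemma bilE (R : realType) (n : nat) (X : 'M[R]_n) (a b : 'cV[R]_n) :
  (a^T *m X *m b) 0 0 = frob X (a *m b^T).
Proof.
rewrite mxE /frob exchange_big /=; apply eq_bigr => j _.
rewrite mxE mulr_suml; apply eq_bigr => i _.
by rewrite outerE !mxE; ring.
Qed.

Lemma dotE (R : realType) (n : nat) (a b : 'cV[R]_n) :
  (a^T *m b) 0 0 = \sum_i a i 0 * b i 0.
Proof. by rewrite mxE; apply eq_bigr => i _; rewrite mxE. Qed.

Lemma frob_oo (R : realType) (n : nat) (a w : 'cV[R]_n) :
  frob (a *m a^T) (oo w) = ((a^T *m w) 0 0) ^+ 2.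
Proof.
rewrite dotE expr2 /frob mulr_suml; apply eq_bigr => i _.
rewrite mulr_sumr; apply eq_bigr => j _.
by rewrite /oo !outerE; ring.
Qed.

Lemma psd_oo (R : realType) (n : nat) (v : 'cV[R]_n) : psd (oo v).
Proof.
split; first by rewrite /symmS /oo trmx_mul trmxK.
by move=> w; rewrite bilE frob_oo sqr_ge0.
Qed.

Lemma psd_scale (R : realType) (n : nat) (X : 'M[R]_n) c : 0 <= c -> psd X -> psd (c *: X).
Proof.
move=> c0 [sX pX]; split; first by rewrite /symmS linearZ /= sX.
by move=> w; rewrite bilE frobZl mulr_ge0 // -bilE.
Qed.

Lemma oo_scale (R : realType) (n : nat) (v : 'cV[R]_n) c : oo (c *: v) = c ^+ 2 *: oo v.
Proof. by rewrite /oo linearZ /= -scalemxAl -scalemxAr scalerA expr2. Qed.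

Lemma oo_add (R : realType) (n : nat) (a b : 'cV[R]_n) t :
  oo (a + t *: b) = oo a + t *: (a *m b^T + b *m a^T) + t ^+ 2 *: oo b.
Proof.
apply/matrixP => i j; rewrite /oo !mxE !big_ord1 !mxE. 
by ring.
Qed.

Lemma frob_sym (R : realType) (n : nat) (X : 'M[R]_n) (a b : 'cV[R]_n) :
  symmS X -> frob X (b *m a^T) = frob X (a *m b^T).
Proof.
move=> sX; rewrite -!bilE.
have -> : b^T *m X *m a = (a^T *m X *m b)^T by rewrite !trmx_mul trmxK sX mulmxA.
by rewrite mxE.
Qed.

Lemma CS (R : realType) (n : nat) (X : 'M[R]_n) (a b : 'cV[R]_n) :
  psd X -> (frob X (a *m b^T)) ^+ 2 <= frob X (oo a) * frob X (oo b).
Proof.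
move=> [sX pX].
have qf : forall w, 0 <= frob X (oo w) by move=> w; rewrite -bilE; apply: pX.
have H t : 0 <= frob X (oo a) + 2 * t * frob X (a *m b^T) + t ^+ 2 * frob X (oo b).
  have := qf (a + t *: b); rewrite oo_add !frobDr !frobZr frobDr frob_sym //.
  by congr (0 <= _); ring.
set qa := frob X (oo a) in H *; set qb := frob X (oo b) in H *;
set p := frob X (a *m b^T) in H *.
have qa0 : 0 <= qa by apply: qf.
have qb0 : 0 <= qb by apply: qf.
case: (ltrgtP qb 0) => [|qbp|qbe]; first by rewrite ltNge qb0.
- have := H (- p / qb).
  have -> : qa + 2 * (- p / qb) * p + (- p / qb) ^+ 2 * qb = (qa * qb - p ^+ 2) / qb.
    by field; rewrite gt_eqF.
  by rewrite pmulr_lge0 ?invr_gt0 // subr_ge0.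
- rewrite qbe mulr0.
  case: (eqVneq p 0) => [->|pn0]; first by rewrite expr0n.
  have := H (- (qa + 1) / (2 * p)).
  have -> : qa + 2 * (- (qa + 1) / (2 * p)) * p + (- (qa + 1) / (2 * p)) ^+ 2 * qb = -1.
    by rewrite qbe; field; rewrite pn0.
  by rewrite ler0N1.
Qed.

Lemma frob_e (R : realType) (n : nat) (X : 'M[R]_n) i (w : 'cV[R]_n) :
  frob X ((delta_mx i 0 : 'cV[R]_n) *m w^T) = (row i X *m w) 0 0.
Proof. by rewrite -bilE trmx_delta -rowE. Qed.

Lemma frob_ee (R : realType) (n : nat) (X : 'M[R]_n) i j :
  frob X ((delta_mx i 0 : 'cV[R]_n) *m (delta_mx j 0 : 'cV[R]_n)^T) = X i j.
Proof. by rewrite frob_e -colE !mxE. Qed.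

Lemma diag_ge0 (R : realType) (n : nat) (X : 'M[R]_n) i : psd X -> 0 <= X i i.
Proof. by move=> [_ pX]; have := pX (delta_mx i 0 : 'cV[R]_n); rewrite bilE frob_ee. Qed.

Lemma diag_zero (R : realType) (n : nat) (X : 'M[R]_n) i j :
  psd X -> X i i = 0 -> X i j = 0.
Proof.
move=> pX h; have := CS (delta_mx i 0 : 'cV[R]_n) (delta_mx j 0) pX.
rewrite /oo !frob_ee h mul0r => hle; apply/eqP; rewrite -sqrf_eq0 eq_le hle sqr_ge0 //.

Qed.

Lemma factor_aux (R : realType) (n : nat) (N : nat) : forall X : 'M[R]_n,
  psd X -> (#|[set i | X i i != 0%R]| <= N)%N -> exists s : seq 'cV[R]_n, X = \sum_(v <- s) oo v.
Proof.
have zero : forall X : 'M[R]_n, psd X -> (forall i, X i i = 0) -> exists s : seq 'cV[R]_n, X = \sum_(v <- s) oo v.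
  move=> X pX h; exists [::]; rewrite big_nil; apply/matrixP => i j.
  by rewrite diag_zero // mxE.
elim: N => [|N IH] X pX Hc.
  apply: zero => // i; apply/eqP; apply: contraT => hi.
  by move: Hc; rewrite leqn0 => /eqP/cards0_eq/setP/(_ i); rewrite !inE hi.
case: (pickP (fun i => X i i != 0)) => [i /= Hi|H0]; last first.
  by apply: zero => // i; apply/eqP; have := H0 i => /= /negbFE.
have [sX pX'] := pX.
set d := X i i.
have dp : 0 < d by rewrite lt_def Hi diag_ge0.
set c := col i X.
set v := (Num.sqrt d)^-1 *: c.
have ov : oo v = d^-1 *: (c *m c^T).
  rewrite /v oo_scale exprVn sqr_sqrtr //; exact: ltW.
set X' := X - oo v.
have pX2 : psd X'.
  split.
    by rewrite /symmS /X' linearB /= sX; have [-> _] := psd_oo v.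
  move=> w; rewrite bilE /X' frobDl frobNl -/(oo w) ov frobZl frob_oo.
  have hc : c^T = row i X by rewrite /c tr_col sX.
  rewrite hc subr_ge0.
  have := CS (delta_mx i 0 : 'cV[R]_n) w pX; rewrite frob_e /oo frob_ee -/d.
  move=> hcs; rewrite -(ler_pM2l dp) mulrA mulfV ?gt_eqF // mul1r.
  by rewrite (le_trans hcs).
have [s Hs] : exists s : seq 'cV[R]_n, X' = \sum_(v <- s) oo v.
  apply: IH => //.
  have sub : [set k | X' k k != 0] \subset [set k | X k k != 0] :\ i.
    apply/subsetP => k; rewrite !inE /X' ov !mxE !big_ord1 /c !mxE.
    case: (eqVneq k i) => [->|ki] /=.
      by rewrite (mulKf (lt0r_neq0 dp)) addrN eqxx.
    apply: contra => /eqP h; rewrite h (diag_zero _ pX h) mul0r mulr0 subrr //.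
  apply: leq_trans (subset_leq_card sub) _.
  move: Hc; rewrite (cardsD1 i) inE Hi /=; by [].
exists (v :: s); rewrite big_cons -Hs /X'.
by rewrite addrC subrK.
Qed.

Lemma factor (R : realType) (n : nat) (X : 'M[R]_n) :
  psd X -> exists s : seq 'cV[R]_n, X = \sum_(v <- s) oo v.
Proof. move=> pX; exact: (factor_aux (N := #|[set i | X i i != 0%R]|)). Qed.

Lemma psd_frob_ge0 (R : realType) (n : nat) (X Y : 'M[R]_n) :
  psd X -> psd Y -> 0 <= frob X Y.
Proof.
move=> [sX pX] /factor [s ->]; rewrite frob_sumr sumr_ge0 // => v _.
by rewrite -bilE.
Qed.

Lemma rot (R : realType) (n : nat) (M : 'M[R]_n) (a b : 'cV[R]_n) :
  frob M (oo a) * frob M (oo b) < 0 ->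
  exists z c : 'cV[R]_n, frob M (oo z) = 0 /\ oo z + oo c = oo a + oo b.
Proof.
set qa := frob M (oo a); set qb := frob M (oo b); move=> hneg.
set p := frob M (a *m b^T + b *m a^T).
have qbn0 : qb != 0 by apply: contraTneq hneg => ->; rewrite mulr0 ltxx.
set D := p ^+ 2 - 4 * qa * qb.
have D0 : 0 <= D by rewrite /D; nra.
set sD := Num.sqrt D.
have hsD : sD ^+ 2 = D by rewrite sqr_sqrtr.
set t := (- p + sD) / (2 * qb).
have Ht : qa + t * p + t ^+ 2 * qb = 0.
  transitivity ((sD ^+ 2 - (p ^+ 2 - 4 * qa * qb)) / (4 * qb)).
    by rewrite /t; field; rewrite qbn0.
  by rewrite hsD /D subrr mul0r.
have r0 : 0 < 1 + t ^+ 2 by rewrite ltr_pwDl ?sqr_ge0.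
set u := (Num.sqrt (1 + t ^+ 2))^-1.
have Hu : u ^+ 2 * (1 + t ^+ 2) = 1.
  by rewrite /u exprVn sqr_sqrtr ?ltW // mulVf // gt_eqF.
exists (u *: (a + t *: b)), (u *: (b + (- t) *: a)); split.
  by rewrite oo_scale frobZr oo_add !frobDr !frobZr -/qa -/qb -/p Ht mulr0.
apply/matrixP => i j; rewrite /oo !mxE !big_ord1 !mxE.
by rewrite -[RHS]mul1r -Hu; ring.
Qed.

Lemma SZ (R : realType) (n : nat) (M : 'M[R]_n) (N : nat) : forall s : seq 'cV[R]_n,
  size s = N -> \sum_(v <- s) frob M (oo v) = 0 ->
  exists s' : seq 'cV[R]_n, \sum_(v <- s') oo v = \sum_(v <- s) oo v /\
     forall v, v \in s' -> frob M (oo v) = 0.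
Proof.
elim: N => [|N IH] s.
  by move=> /size0nil -> _; exists [::].
case: s => [//|a t] /= [st]; rewrite big_cons => hsum.
case: (eqVneq (frob M (oo a)) 0) => [ha|ha].
  have [s' [h1 h2]] : exists s' : seq 'cV[R]_n, \sum_(v <- s') oo v = \sum_(v <- t) oo v /\
     forall v, v \in s' -> frob M (oo v) = 0.
    by apply: IH => //; move: hsum; rewrite ha add0r.
  exists (a :: s'); split; first by rewrite !big_cons h1.
  by move=> v; rewrite in_cons => /orP [/eqP ->|]; [|apply: h2].
case: (boolP (has (fun b => frob M (oo a) * frob M (oo b) < 0) t)) => [/hasP [b bt hb]|/hasPn hn].
  have [z [c [hz hzc]]] := rot hb.
  have pt := perm_to_rem bt.
  have hc : frob M (oo c) = frob M (oo a) + frob M (oo b) - frob M (oo z).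
    by rewrite -frobDr -hzc frobDr; ring.
  have [s' [h1 h2]] : exists s' : seq 'cV[R]_n, \sum_(v <- s') oo v = \sum_(v <- c :: rem b t) oo v /\
     forall v, v \in s' -> frob M (oo v) = 0.
    apply: IH; first by rewrite /= size_rem // -st prednK //; case: (t) bt.
    by rewrite big_cons hc hz subr0 -addrA; move: hsum; rewrite (perm_big _ pt) big_cons.
  exists (z :: s'); split.
    by rewrite !big_cons h1 big_cons addrA hzc (perm_big _ pt) big_cons addrA.
  by move=> v; rewrite in_cons => /orP [/eqP ->|]; [|apply: h2].
exfalso; move: ha; apply/negP; rewrite negbK.
have h0 : 0 <= frob M (oo a) * \sum_(v <- t) frob M (oo v).
  rewrite mulr_sumr big_seq sumr_ge0 // => v vt.
  by have := hn v vt; rewrite -leNgt.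
have : \sum_(v <- t) frob M (oo v) = - frob M (oo a) by move/eqP: hsum; rewrite addrC addr_eq0 => /eqP.
move=> e; rewrite e mulrN -expr2 oppr_ge0 in h0.
by rewrite -sqrf_eq0 eq_le h0 sqr_ge0.
Qed.

Lemma psum_seq_eq0 (R : realType) (I : eqType) (s : seq I) (F : I -> R) :
  (forall v, v \in s -> 0 <= F v) -> \sum_(v <- s) F v = 0 ->
  forall v, v \in s -> F v = 0.
Proof.
elim: s => [//|a t IH] h; rewrite big_cons => /eqP.
have ha : 0 <= F a by apply: h; rewrite mem_head.
have ht : forall v, v \in t -> 0 <= F v by move=> v vt; apply: h; rewrite in_cons vt orbT.
rewrite paddr_eq0 //; last by rewrite big_seq sumr_ge0.
move=> /andP [/eqP h1 /eqP h2] v; rewrite in_cons => /orP [/eqP ->//|]; exact: IH.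
Qed.

Lemma exists_pos (R : realType) (I : eqType) (s : seq I) (F : I -> R) :
  \sum_(v <- s) F v = 1 -> exists v, v \in s /\ 0 < F v.
Proof.
move=> h; case: (boolP (has (fun v => 0 < F v) s)) => [/hasP [v vs hv]|/hasPn hn].
  by exists v.
exfalso; have : \sum_(v <- s) F v <= 0.
  rewrite big_seq -oppr_ge0 -sumrN sumr_ge0 // => v vs.
  by rewrite oppr_ge0 leNgt; apply: hn.
by rewrite h ler10.
Qed.

Lemma rank_oo (R : realType) (n : nat) (v : 'cV[R]_n) : oo v != 0 -> \rank (oo v) = 1%N.
Proof.
move=> h; apply/eqP; rewrite eqn_leq; apply/andP; split.
  exact: leq_trans (mxrankM_maxl _ _) (rank_leq_col _).
by rewrite lt0n mxrank_eq0.
Qed.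
Unset Implicit Arguments.

Theorem mainTheorem4 (R : realType) (n m : nat)
  (Q H : 'M[R]_n) (B : 'I_m -> 'M[R]_n) (Xbar : 'M[R]_n) :
  symmS Q -> symmS H -> (forall k, symmS (B k)) ->
  condB B ->
  symmS Xbar ->
  Jplus B Xbar -> frob H Xbar = 1 ->
  (exists (tbar : R) (ybar : 'I_m -> R) (Ybar : 'M[R]_n),
      (forall k, 0 <= ybar k) /\ psd Ybar /\
      Q - tbar *: H - \sum_(k < m) ybar k *: B k = Ybar /\
      (forall k, ybar k * frob (B k) Xbar = 0) /\
      frob Ybar Xbar = 0) ->
  (exists k, frob (B k) Xbar = 0) ->
  exists (x : 'cV[R]_n) (tau : R),
    ((\rank Xbar)%:R)^-1 <= tau /\
    frob H (x *m x^T) = tau /\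
    sdp_optimal B Q H (tau^-1 *: (x *m x^T)) /\
    qcqp_optimal B Q H (tau^-1 *: (x *m x^T)) /\
    frob Q (tau^-1 *: (x *m x^T)) = frob Q Xbar.
Proof.
move=> sQ sH sB cB sXb JXb HXb [tbar [ybar [Yb [y0 [pY [eQ [comp YX]]]]]]] [k hk].
have [pXb Xj] := JXb.
have [s Hs] := factor pXb.
have [s' [Hs' hz]] : exists s' : seq 'cV[R]_n, \sum_(v <- s') oo v = \sum_(v <- s) oo v /\
     forall v, v \in s' -> frob (B k) (oo v) = 0.
  by apply: (SZ (N := size s)) => //; rewrite -frob_sumr -Hs hk.
rewrite -Hs in Hs'.
have Jv : forall v, v \in s' -> Jplus B (oo v).
  by move=> v hv; apply: cB (psd_oo v) (hz v hv).
have Yv : forall v, v \in s' -> frob Yb (oo v) = 0.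
  apply: psum_seq_eq0; first by move=> v _; apply: psd_frob_ge0 pY (psd_oo v).
  by rewrite -frob_sumr Hs'.
have yv : forall j v, v \in s' -> ybar j * frob (B j) (oo v) = 0.
  move=> j v vs; case: (eqVneq (ybar j) 0) => [->|yn0]; first by rewrite mul0r.
  have hj : frob (B j) Xbar = 0.
    by have /eqP := comp j; rewrite mulf_eq0 (negbTE yn0) => /eqP.
  rewrite (psum_seq_eq0 (s := s') (F := fun v => frob (B j) (oo v))) ?mulr0 //.
    by move=> w ws; have [_ ->] := Jv w ws.
  by rewrite -frob_sumr Hs'.
have [v [vs Hv]] : exists v, v \in s' /\ 0 < frob H (oo v).
  by apply: exists_pos; rewrite -frob_sumr Hs'.
set t0 := frob H (oo v) in Hv.
have eQ' : Q = Yb + tbar *: H + \sum_(k < m) ybar k *: B k.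
  by rewrite -eQ -addrA (addrC (tbar *: H)) addrA subrK subrK.
have val : forall Z, frob Q Z = frob Yb Z + tbar * frob H Z + \sum_(k < m) ybar k * frob (B k) Z.
  move=> Z; rewrite {1}eQ' !frobDl frobZl frob_suml.
  by congr (_ + _); apply: eq_bigr => j _; rewrite frobZl.
set cc := 1 + t0^-1.
have cc1 : 1 <= cc by rewrite lerDl invr_ge0 ltW.
have ecc : cc * t0 = t0 + 1 by rewrite /cc mulrDl mul1r mulVf ?gt_eqF.
set x := cc *: v.
set tau := frob H (x *m x^T).
have etau : tau = cc ^+ 2 * t0 by rewrite /tau -/(oo x) /x oo_scale frobZr.
have tau1 : 1 <= tau.
  rewrite etau expr2 -mulrA ecc; rewrite -[1]mulr1; apply: ler_pM => //; lra.
have Xt : tau^-1 *: (x *m x^T) = t0^-1 *: oo v.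
  rewrite -/(oo x) /x oo_scale scalerA etau; congr (_ *: _).
  by field; rewrite !gt_eqF //; lra.
have t0n0 : t0 != 0 by rewrite gt_eqF.
have JXt : Jplus B (t0^-1 *: oo v).
  split; first by apply: psd_scale (psd_oo v); rewrite invr_ge0 ltW.
  move=> j; rewrite frobZr; apply: mulr_ge0; first by rewrite invr_ge0; exact: ltW.
  by have [_ ] := Jv v vs.
have HXt : frob H (t0^-1 *: oo v) = 1 by rewrite frobZr mulVf.
have vXt : frob Q (t0^-1 *: oo v) = tbar.
  rewrite val !frobZr Yv // mulr0 add0r mulVf // mulr1 big1 ?addr0 // => j _.
  by rewrite frobZr mulrCA yv // mulr0.
have vXb : frob Q Xbar = tbar.
  by rewrite val YX HXb add0r mulr1 big1 ?addr0.
have lb : forall Y, Jplus B Y -> frob H Y = 1 -> tbar <= frob Q Y.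
  move=> Y [pYY YB] HY; rewrite val HY mulr1.
  have h1 : 0 <= frob Yb Y by apply: psd_frob_ge0.
  have h2 : 0 <= \sum_(k < m) ybar k * frob (B k) Y.
    by apply: sumr_ge0 => j _; apply: mulr_ge0.
  lra.
have oon0 : oo v != 0 by apply: contraTneq Hv => e; rewrite /t0 e frob0r ltxx.
exists x, tau; split.
  apply: le_trans tau1.
  case: (posnP (\rank Xbar)) => [->|rp]; first by rewrite invr0.
  by rewrite invf_le1 ?ltr0n // ler1n.
split; first by [].
rewrite Xt; split; last split; last by rewrite vXt vXb.
  by split => // Y JY HY; rewrite vXt; apply: lb.
split; first by split => //; split => //; rewrite mxrank_scale_nz ?invr_eq0 // rank_oo.
by move=> Y JY _ HY; rewrite vXt; apply: lb.
Qed.
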